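(* Let $\mathcal{A}\subset\mathbb{Z}$ be a finite alphabet, let $G=(V,E)$ be a finite directed graph with edge labelling $\ell:E\to\mathcal{A}$, assume the matrix $M=\sum_{a\in\mathcal{A}}M_a$ is primitive, let $\beta>1$ be a Pisot number and let $\nu=(\phi^+)_*(\mu^+)$ as described in the context. Then the set $P=\{x\in\mathbb{R}\mid \nu(\{x\})>0\}$ of atoms of $\nu$ is a finite subset of $\mathbb{Q}(\beta)$.
   Context: For $a\in\mathcal{A}$, $M_a$ is the $V\times V$ matrix with $(M_a)_{ij}=1$ if $(i,j)\in E$ and $\ell((i,j))=a$, and $0$ otherwise. By Perron–Frobenius, $M$ has a dominant eigenvalue $\lambda>0$ with positive left eigenvector $\mathbf v_L$ and right eigenvector $\mathbf v_R$, normalised by $\mathbf v_L^{\mathsf T}\mathbf v_R=1$. $\mathcal{K}^+\subseteq\mathcal{A}^{\mathbb{N}}$ is the set of sequences $(\ell(e_k))_{k\ge1}$ for infinite paths $e_1e_2\ldots$ in $G$ (terminal vertex of $e_j$ equals initial vertex of $e_{j+1}$). $\mu^+$ is the Borel probability measure on $\mathcal{K}^+$ with $\mu^+([\varepsilon_1,\ldots,\varepsilon_k])=\lambda^{-k}\mathbf v_L^{\mathsf T}M_{\varepsilon_1}\cdots M_{\varepsilon_k}\mathbf v_R$ on cylinder sets $[\varepsilon_1,\ldots,\varepsilon_k]=\{x\in\mathcal{K}^+: x_1=\varepsilon_1,\ldots,x_k=\varepsilon_k\}$. A Pisot number is an algebraic integer $>1$ all of whose other Galois conjugates have modulus $<1$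 (integers $\ge2$ included). $\phi^+:\mathcal{K}^+\to\mathbb{R}$, $(x_k)\mapsto\sum_{k\ge1}x_k\beta^{-k}$, and $\nu(A)=\mu^+((\phi^+)^{-1}(A))$. *)

(* Defs.v *)
From HB Require Import structures.
From mathcomp Require Import all_boot all_order all_algebra.
From mathcomp Require Import all_classical all_reals all_analysis.
From mathcomp Require Import complex.

Set Implicit Arguments.
Unset Strict Implicit.
Unset Printing Implicit Defensive.

Import Order.TTheory GRing.Theory Num.Theory.
Local Open Scope ring_scope.
Local Open Scope classical_set_scope.

(* A sequence x : nat -> int encodes (x_1, x_2, ...) via x k = x_(k+1).     *)
Definition seqZ := nat -> int.
HB.instance Definition _ := Choice.copy seqZ (nat -> int).
HB.instance Definition _ := isPointed.Build seqZ (fun _ => 0).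

Definition cylinder (s : seq int) : set seqZ :=
  [set x | forall i, (i < size s)%N -> x i = nth 0 s i].

Definition cylinders : set (set seqZ) := [set C | exists s, C = cylinder s].

(* The Borel sigma-algebra of the product topology on Z^N, i.e. the one
   generated by cylinder sets. *)
Notation seqSpace := (g_sigma_algebraType cylinders).

Definition Mlab (R : pzRingType) (n : nat) (E : {set 'I_n * 'I_n})
    (lab : 'I_n * 'I_n -> int) (a : int) : 'M[R]_n :=
  \matrix_(i, j) (((i, j) \in E) && (lab (i, j) == a))%:R.

Definition Mtot (R : pzRingType) (n : nat) (E : {set 'I_n * 'I_n})
    (lab : 'I_n * 'I_n -> int) (A : seq int) : 'M[R]_n :=
  \sum_(a <- A) Mlab R E lab a.

Definition Mword (R : pzRingType) (n : nat) (E : {set 'I_n * 'I_n})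
    (lab : 'I_n * 'I_n -> int) (s : seq int) : 'M[R]_n :=
  \prod_(a <- s) Mlab R E lab a.

Definition primitive (R : numDomainType) (n : nat) (M : 'M[R]_n) : Prop :=
  (forall i j, 0 <= M i j) /\ exists k : nat, (0 < k)%N /\ forall i j, 0 < (M ^+ k) i j.

Definition Kplus (n : nat) (E : {set 'I_n * 'I_n}) (lab : 'I_n * 'I_n -> int)
  : set seqZ :=
  [set x | exists v : nat -> 'I_n,
     forall k, (v k, v k.+1) \in E /\ x k = lab (v k, v k.+1)].

(* beta is an algebraic integer > 1 (its minimal polynomial over Q is a monic
   integer polynomial p) all of whose other Galois conjugates (the other
   complex roots of p) have modulus < 1. *)
Definition pisot (R : realType) (beta : R) : Prop :=
  1 < beta /\
  exists p : {poly int},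
    [/\ p \is monic,
        irreducible_poly (map_poly intr p : {poly rat}),
        root (map_poly intr p) beta &
        forall z : R[i], root (map_poly intr p) z -> z != (beta%:C)%C -> `|z| < 1].

Definition in_Qbeta (R : realType) (beta x : R) : Prop :=
  exists p q : {poly rat},
    (map_poly ratr q).[beta] != 0 /\
    x = (map_poly ratr p).[beta] / (map_poly ratr q).[beta].

Definition phiplus (R : realType) (beta : R) (x : seqZ) : R :=
  limn (fun N => \sum_(k < N) (x k)%:~R * beta ^- k.+1).

Definition atoms (R : realType) (beta : R) (mu : set seqSpace -> \bar R)
  : set R :=
  [set x : R | (0 < mu (phiplus beta @^-1` [set x]))%E].

(* Main.v *)
Require Import Defs.
From HB Require Import structures.
From mathcomp Require Import all_boot all_order all_algebra.
From mathcomp Require Import all_classical all_reals all_analysis.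
From mathcomp Require Import complex.
From mathcomp Require Import ring lra.
Import Order.TTheory GRing.Theory Num.Theory.
Import numFieldNormedType.Exports.
Local Open Scope ring_scope.
Local Open Scope classical_set_scope.
Set Implicit Arguments.
Unset Strict Implicit.
Unset Printing Implicit Defensive.
Lemma cylinder_meas (s : seq int) : measurable (cylinder s : set seqSpace).
Proof. by apply: sub_sigma_algebra; exists s. Qed.

Lemma fc_repr (p : nat) (Y : set seqZ) :
  (forall y y' : seqZ, (forall i, (i < p)%N -> y i = y' i) -> Y y -> Y y') ->
  exists F : nat -> set seqZ, Y = \bigcup_k F k /\
    forall k, F k = set0 \/ exists w, [/\ size w = p, F k = cylinder w & cylinder w `<=` Y].
Proof.
move=> HY.
pose F k := match (unpickle k : option (seq int)) with
  | Some w => if `[< size w = p /\ cylinder w `<=` Y >] then cylinder w else set0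
  | None => set0 end.
exists F; split.
  apply/seteqP; split.
    move=> y Yy; exists (pickle (mkseq y p)) => //.
    rewrite /F pickleK.
    have H1 : size (mkseq y p) = p /\ cylinder (mkseq y p) `<=` Y.
      split; first by rewrite size_mkseq.
      move=> z zc; apply: (HY y) => // i ip.
      by rewrite zc ?size_mkseq // nth_mkseq.
    rewrite (asboolT H1) => i; rewrite size_mkseq => ip; by rewrite nth_mkseq.
  move=> y [k _]; rewrite /F; case: (unpickle k) => // w.
  by case: asboolP => // -[_ ]; apply.
move=> k; rewrite /F; case: (unpickle k) => [w|]; last by left.
case: asboolP => [[h1 h2]|_]; last by left.
by right; exists w.
Qed.

Lemma fc_meas (p : nat) (Y : set seqZ) :
  (forall y y' : seqZ, (forall i, (i < p)%N -> y i = y' i) -> Y y -> Y y') ->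
  measurable (Y : set seqSpace).
Proof.
move=> /fc_repr [F [-> HF]].
apply: bigcupT_measurable => k; case: (HF k) => [->|[w [_ -> _]]].
  exact: measurable0.
exact: cylinder_meas.
Qed.
Lemma ev_ex (P : nat -> Prop) : (\forall n \near \oo, P n) -> exists N, forall n, (N <= n)%N -> P n.
Proof. by case => N _ H; exists N. Qed.

Lemma ex_ev (P : nat -> Prop) : (exists N, forall n, (N <= n)%N -> P n) -> \forall n \near \oo, P n.
Proof. by case => N H; exists N. Qed.

Lemma archi_inv (R : realType) (e : R) : 0 < e -> exists m : nat, m.+1%:R^-1 < e.
Proof.
move=> e0; have := @near_infty_natSinv_lt R (PosNum e0).
by move/ev_ex => [N HN]; exists N; apply: HN.
Qed.

Definition Sp (R : realType) (beta : R) (y : seqZ) (N : nat) : R :=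
  \sum_(k < N) (y k)%:~R * beta ^- k.+1.

Lemma cvg_eps (R : realType) (u : nat -> R) (x : R) :
  (u @ \oo --> x) <-> forall m : nat, exists N, forall p, `|u (N + p)%N - x| < m.+1%:R^-1.
Proof.
split.
  move/cvgrPdistC_lt => H m.
  have hm0 : 0 < (m.+1%:R^-1 : R) by rewrite invr_gt0 ltr0Sn.
  have /ev_ex [N HN] := H _ hm0.
  by exists N => p; apply: HN; rewrite leq_addr.
move=> H; apply/cvgrPdistC_lt => e e0.
have [m hm] := archi_inv e0.
have [N HN] := H m.
apply: ex_ev; exists N => k Nk.
rewrite -(subnKC Nk); exact: lt_trans (HN _) hm.
Qed.

Lemma cvg_cauchy_eps (R : realType) (u : nat -> R) :
  cvgn u <-> forall m : nat, exists N, forall p q, `|u (N + p)%N - u (N + q)%N| < m.+1%:R^-1.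
Proof.
split.
  move=> /cvg_eps H m.
  have [N HN] := H (m.*2.+1).
  exists N => p q.
  have -> : u (N + p)%N - u (N + q)%N = (u (N + p)%N - limn u) - (u (N + q)%N - limn u) by ring.
  apply: (le_lt_trans (ler_normB _ _)).
  have -> : (m.+1%:R^-1 : R) = m.*2.+2%:R^-1 + m.*2.+2%:R^-1.
    have h2 : (m.*2.+2%:R : R) = 2 * m.+1%:R by rewrite -natrM mul2n doubleS.
    by rewrite h2; field; rewrite addrC natr1 pnatr_eq0.
  by apply: ltrD; apply: HN.
move=> H; apply/cauchy_cvgP/cauchy_exP => e e0.
have [m hm] := archi_inv e0.
have [N HN] := H m.
exists (u N); apply: ex_ev; exists N => k Nk.
rewrite -ball_normE /=.
rewrite -(subnKC Nk); apply: lt_trans hm.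
by have := HN 0%N (k - N)%N; rewrite addn0.
Qed.

Lemma Sp_fc (R : realType) (beta : R) (K N : nat) (y y' : seqZ) :
  (N <= K)%N -> (forall i, (i < K)%N -> y i = y' i) -> Sp beta y N = Sp beta y' N.
Proof.
move=> NK H; apply: eq_bigr => i _; rewrite H //.
exact: leq_trans (ltn_ord i) NK.
Qed.

Lemma const_meas (P : Prop) : measurable ([set _ : seqSpace | P]).
Proof.
case: (pselect P) => HP.
  by have -> : [set _ : seqSpace | P] = setT by apply/seteqP; split.
by have -> : [set _ : seqSpace | P] = set0 by apply/seteqP; split.
Qed.

Lemma Tset_meas (R : realType) (beta x : R) :
  measurable [set y : seqSpace | Sp beta y @ \oo --> x].
Proof.
have -> : [set y : seqSpace | Sp beta y @ \oo --> x] =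
  \bigcap_m \bigcup_N \bigcap_p [set y : seqSpace | `|Sp beta y (N + p)%N - x| < m.+1%:R^-1].
  apply/seteqP; split.
    move=> y /cvg_eps H m _; have [N HN] := H m; exists N => // p _; exact: HN.
  move=> y H; apply/cvg_eps => m; have [N _ HN] := H m I; exists N => p; exact: HN.
apply: bigcapT_measurable => m; apply: bigcupT_measurable => N.
apply: bigcapT_measurable => p.
apply: (@fc_meas (N + p)%N) => y y' H /=.
by rewrite (@Sp_fc _ _ (N + p)%N _ y y').
Qed.

Lemma Conv_meas (R : realType) (beta : R) :
  measurable [set y : seqSpace | cvgn (Sp beta y)].
Proof.
have -> : [set y : seqSpace | cvgn (Sp beta y)] =
  \bigcap_m \bigcup_N \bigcap_p \bigcap_q
     [set y : seqSpace | `|Sp beta y (N + p)%N - Sp beta y (N + q)%N| < m.+1%:R^-1].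
  apply/seteqP; split.
    move=> y /cvg_cauchy_eps H m _; have [N HN] := H m; exists N => // p _ q _; exact: HN.
  move=> y H; apply/cvg_cauchy_eps => m; have [N _ HN] := H m I; exists N => p q; exact: HN.
apply: bigcapT_measurable => m; apply: bigcupT_measurable => N.
apply: bigcapT_measurable => p; apply: bigcapT_measurable => q.
apply: (@fc_meas (N + p + q)%N) => y y' H /=.
rewrite (@Sp_fc _ _ (N + p + q)%N _ y y') ?leq_addr //.
by rewrite (@Sp_fc _ _ (N + p + q)%N (N + q) y y') // -addnA leq_add2l leq_addl.
Qed.

Lemma P_meas (R : realType) (beta x : R) :
  measurable (phiplus beta @^-1` [set x] : set seqSpace).
Proof.
have -> : (phiplus beta @^-1` [set x] : set seqSpace) =
   [set y : seqSpace | Sp beta y @ \oo --> x] `|`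
   ((~` [set y : seqSpace | cvgn (Sp beta y)]) `&` [set _ : seqSpace | (point : R) = x]).
  apply/seteqP; split => y /=.
    rewrite /phiplus => <-.
    case: (pselect (cvgn (Sp beta y))) => hc; first by left.
    by right; split => //; rewrite dvgP.
  case => [hy|[hc <-]].
    exact: (cvg_lim (@Rhausdorff R)).
  by rewrite /phiplus dvgP.
apply: measurableU; first exact: Tset_meas.
apply: measurableI; last exact: const_meas.
by apply: measurableC; exact: Conv_meas.
Qed.

Definition Kb (R : realType) (A : seq int) : R := \sum_(a <- A) `|a|%:~R.
Definition Cb (R : realType) (beta : R) (A : seq int) : R := Kb R A / (beta - 1).
Definition Gset (A : seq int) : set seqZ := [set y | forall k, y k \in A].

Lemma Kb_ge0 (R : realType) (A : seq int) : 0 <= Kb R A.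
Proof. by apply: sumr_ge0 => a _; rewrite ler0z normr_ge0. Qed.

Lemma Kb_ge (R : realType) (A : seq int) (a : int) : a \in A -> `|a|%:~R <= Kb R A.
Proof.
elim: A => // b A IH; rewrite inE /Kb big_cons => /orP [/eqP ->|aA].
  by rewrite lerDl; apply: Kb_ge0.
by apply: (le_trans (IH aA)); rewrite lerDr ler0z normr_ge0.
Qed.

Lemma Kb_ge' (R : realType) (A : seq int) (a : int) : a \in A -> `|(a%:~R : R)| <= Kb R A.
Proof. by move=> /(Kb_ge R); rewrite -intr_norm. Qed.

Lemma geo_sum (R : realType) (beta : R) (N : nat) : 1 < beta ->
  \sum_(k < N) beta ^- k.+1 = (1 - beta ^- N) / (beta - 1).
Proof.
move=> b1; have b0 : beta != 0 by rewrite gt_eqF // (lt_trans ltr01).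
have b10 : beta - 1 != 0 by rewrite subr_eq0 gt_eqF.
elim: N => [|N IH]; first by rewrite big_ord0 expr0 invr1 subrr mul0r.
rewrite big_ord_recr /= IH exprS invfM.
field; apply/andP; split => //.
by rewrite expf_neq0.
Qed.

Lemma geo_sum_le (R : realType) (beta : R) (N : nat) : 1 < beta ->
  \sum_(k < N) beta ^- k.+1 <= (beta - 1)^-1.
Proof.
move=> b1; rewrite geo_sum // ler_pdivrMr ?subr_gt0 // mulVf ?subr_eq0 ?gt_eqF //.
by rewrite gerBl invr_ge0 exprn_ge0 // ltW // (lt_trans ltr01).
Qed.

Lemma Sp_bound (R : realType) (beta : R) (A : seq int) (y : seqZ) (N : nat) :
  1 < beta -> Gset A y -> `|Sp beta y N| <= Cb beta A.
Proof.
move=> b1 Gy; have b0 : 0 < beta by rewrite (lt_trans ltr01).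
apply: (le_trans (ler_norm_sum _ _ _)).
apply: (@le_trans _ _ (\sum_(k < N) Kb R A * beta ^- k.+1)).
  apply: ler_sum => k _; rewrite normrM.
  rewrite [`|beta ^- k.+1|]ger0_norm; last by rewrite invr_ge0 exprn_ge0 // ltW.
  by rewrite ler_pM2r ?invr_gt0 ?exprn_gt0 //; apply: Kb_ge'.
rewrite -mulr_sumr /Cb; apply: ler_wpM2l; first exact: Kb_ge0.
exact: geo_sum_le.
Qed.

Lemma Sp_series (R : realType) (beta : R) (y : seqZ) :
  Sp beta y = series (fun k => (y k)%:~R * beta ^- k.+1).
Proof. by apply: funext => N; rewrite /Sp /series /= big_mkord. Qed.

Lemma Sp_cvg (R : realType) (beta : R) (A : seq int) (y : seqZ) :
  1 < beta -> Gset A y -> cvgn (Sp beta y).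
Proof.
move=> b1 Gy; have b0 : 0 < beta by rewrite (lt_trans ltr01).
rewrite Sp_series; apply: normed_cvg.
apply: (@series_le_cvg _ _ (geometric (Kb R A / beta) beta^-1)).
- by move=> k; rewrite normr_ge0.
- by move=> k; rewrite /geometric /= mulr_ge0 ?divr_ge0 ?exprn_ge0 ?invr_ge0 ?Kb_ge0 ?(ltW b0).
- move=> k; rewrite /geometric /= normrM.
  rewrite [`|beta ^- k.+1|]ger0_norm; last by rewrite invr_ge0 exprn_ge0 // ltW.
  rewrite -mulrA -exprVn -exprS exprVn.
  by rewrite ler_pM2r ?invr_gt0 ?exprn_gt0 //; apply: Kb_ge'.
- apply: is_cvg_geometric_series.
  by rewrite ger0_norm ?invr_ge0 ?ltW // invf_lt1.
Qed.

Lemma phi_bound (R : realType) (beta : R) (A : seq int) (y : seqZ) :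
  1 < beta -> Gset A y -> `|phiplus beta y| <= Cb beta A.
Proof.
move=> b1 Gy; have hc := Sp_cvg b1 Gy.
rewrite ler_norml; apply/andP; split.
  apply: limr_ge => //; apply: nearW => N.
  by have := Sp_bound N b1 Gy; rewrite ler_norml => /andP [].
apply: limr_le => //; apply: nearW => N.
by have := Sp_bound N b1 Gy; rewrite ler_norml => /andP [].
Qed.

Lemma phi_rec (R : realType) (beta : R) (A : seq int) (y : seqZ) :
  1 < beta -> Gset A y ->
  phiplus beta y = ((y 0%N)%:~R + phiplus beta (fun k => y k.+1)) / beta.
Proof.
move=> b1 Gy; have b0 : beta != 0 by rewrite gt_eqF // (lt_trans ltr01).
have Gy' : Gset A (fun k => y k.+1) by move=> k; apply: Gy.
have hc := Sp_cvg b1 Gy'.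
apply: (cvg_lim (@Rhausdorff R)).
rewrite -cvg_shiftS.
have -> : [sequence Sp beta y n.+1]_n =
   (fun n => ((y 0%N)%:~R + Sp beta (fun k => y k.+1) n) * beta^-1).
  apply: funext => n /=; rewrite /Sp big_ord_recl /= expr1 mulrDl; congr (_ + _).
  rewrite mulr_suml; apply: eq_bigr => i _ /=.
  by rewrite /bump /= add1n -mulrA -invfM -exprSr.
apply: cvgM; last exact: cvg_cst.
by apply: cvgD; [exact: cvg_cst | exact: hc].
Qed.

Fixpoint words (R : realType) (beta : R) (A : seq int) (C : R) (k : nat) (x : R) : seq (seq int) :=
  match k with
  | 0 => if `|x| <= C then [:: [::]] else [::]
  | k'.+1 => flatten [seq [seq a :: w | w <- words beta A C k' (beta * x - a%:~R)] | a <- A]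
  end.

Lemma words_size (R : realType) (beta : R) A C k x w :
  w \in words beta A C k x -> size w = k.
Proof.
elim: k x w => [|k IH] x w /=.
  by case: ifP => // _; rewrite inE => /eqP ->.
move/flatten_mapP => [a _ /mapP [w' /IH hw' ->]] /=; by rewrite hw'.
Qed.

Lemma mkseq_cons (f : nat -> int) k : mkseq f k.+1 = f 0%N :: mkseq (fun i => f i.+1) k.
Proof.
apply: (@eq_from_nth _ 0); first by rewrite size_mkseq /= size_mkseq.
move=> i; rewrite size_mkseq => ik; rewrite nth_mkseq //.
by case: i ik => [|i] ik //=; rewrite nth_mkseq.
Qed.

Lemma words_mem (R : realType) (beta : R) (A : seq int) (k : nat) (x : R) (y : seqZ) :
  1 < beta -> Gset A y -> phiplus beta y = x ->
  mkseq y k \in words beta A (Cb beta A) k x.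
Proof.
move=> b1; elim: k x y => [|k IH] x y Gy hx /=.
  by rewrite -hx phi_bound // inE.
have b0 : beta != 0 by rewrite gt_eqF // (lt_trans ltr01).
have Gy' : Gset A (fun k => y k.+1) by move=> j; apply: Gy.
rewrite mkseq_cons; apply/flatten_mapP; exists (y 0%N); first exact: Gy.
apply: map_f; apply: IH => //.
by rewrite -hx (phi_rec b1 Gy); field.
Qed.

Lemma in_cyl_mkseq (y : seqZ) k : cylinder (mkseq y k) y.
Proof. by move=> i; rewrite size_mkseq => ik; rewrite nth_mkseq. Qed.

Lemma in_bigsetU (T I : Type) (F : I -> set T) (s : seq I) (w : I) (y : T) :
  List.In w s -> F w y -> (\big[setU/set0]_(i <- s) F i) y.
Proof.
elim: s => // a s IH /= [->|hw] hy; rewrite big_cons; first by left.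
by right; apply: IH.
Qed.

Lemma in_In (T : eqType) (w : T) s : w \in s -> List.In w s.
Proof. by elim: s => // a s IH; rewrite inE => /orP [/eqP ->|/IH]; [left|right]. Qed.

Lemma cover_P (R : realType) (beta : R) (A : seq int) (k : nat) (x : R) :
  1 < beta ->
  (phiplus beta @^-1` [set x] : set seqZ) `<=`
  ~` Gset A `|` \big[setU/set0]_(w <- words beta A (Cb beta A) k x) cylinder w.
Proof.
move=> b1 y /= hy; case: (pselect (Gset A y)) => Gy; last by left.
right; apply: (@in_bigsetU _ _ _ _ (mkseq y k)); last exact: in_cyl_mkseq.
by apply: in_In; apply: words_mem.
Qed.

Lemma measure_bigsetU_le (R : realType) (mu : probability seqSpace R) (I : Type) (F : I -> set seqSpace) (s : seq I) :
  (forall i, measurable (F i)) ->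
  (mu (\big[setU/set0]_(i <- s) F i) <= \sum_(i <- s) mu (F i))%E.
Proof.
move=> mF; elim: s => [|a s IH]; first by rewrite !big_nil measure0.
rewrite !big_cons; apply: (le_trans (measureU2 _ _ _)) => //.
  by apply: bigsetU_measurable => i _.
by apply: leeD.
Qed.

Lemma Mlab_notA (R : realType) n (E : {set 'I_n * 'I_n}) (lab : 'I_n * 'I_n -> int) (A : seq int) a :
  (forall e, e \in E -> lab e \in A) -> a \notin A -> Mlab R E lab a = 0.
Proof.
move=> hlab aA; apply/matrixP => i j; rewrite !mxE.
case hE: ((i, j) \in E) => //=.
case: eqP => // ha; move: (hlab _ hE); rewrite ha => h.
by rewrite h in aA.
Qed.

Lemma Mword_notA (R : realType) n (E : {set 'I_n * 'I_n}) (lab : 'I_n * 'I_n -> int) (A : seq int) w :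
  (forall e, e \in E -> lab e \in A) -> ~~ all (mem A) w -> Mword R E lab w = 0.
Proof.
move=> hlab; elim: w => // a w IH /=; rewrite negb_and => /orP [aA|wA].
  by rewrite /Mword big_cons (Mlab_notA R hlab aA) mul0r.
by rewrite /Mword big_cons -/(Mword R E lab w) IH // mulr0.
Qed.

Lemma null_from_cyl (R : realType) (A : seq int) (mu : probability seqSpace R) :
  (forall w, ~~ all (mem A) w -> mu (cylinder w) = 0%E) -> mu (~` Gset A) = 0%E.
Proof.
move=> hc.
pose N k := [set y : seqSpace | y k \notin A].
have mN : forall k, measurable (N k).
  move=> k; apply: (@fc_meas k.+1) => y y' H; rewrite /N /= H //.
have N0 : forall k, mu (N k) = 0%E.
  move=> k.
  have [F [hF HF]] := @fc_repr k.+1 (N k) (fun y y' H => ltac:(rewrite /N /= H //)).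
  have mF : forall j, measurable (F j : set seqSpace).
    by move=> j; case: (HF j) => [->|[w [_ -> _]]]; [exact: measurable0|exact: cylinder_meas].
  have F0 : forall j, mu (F j) = 0%E.
    move=> j; case: (HF j) => [->|[w [sw -> sub]]]; first exact: measure0.
    apply: hc; apply/allPn; exists (nth 0 w k); first by rewrite mem_nth // sw.
    have := sub (fun i => nth 0 w i) (fun i _ => erefl); rewrite /N /=.
    by move=> h; exact: h.
  apply/le_anti/andP; split; last exact: measure_ge0.
  have := @measure_sigma_subadditive _ _ _ mu (N k) F mF (mN k).
  rewrite /subset_sigma_subadditive -hF => /(_ (@subset_refl _ _)) h.
  apply: (le_trans h); rewrite eseries0 // => i _ _; exact: F0.
have -> : ~` Gset A = \bigcup_k N k.
  apply/seteqP; split => y /=.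
    by move=> /existsNP [k hk]; exists k => //; apply/negP.
  by move=> [k _ hk] hG; move: (hG k); rewrite (negbTE hk).
apply/le_anti/andP; split; last exact: measure_ge0.
have mB : measurable (\bigcup_k N k) by apply: bigcupT_measurable.
have := @measure_sigma_subadditive _ _ _ mu _ N mN mB.
rewrite /subset_sigma_subadditive => /(_ (@subset_refl _ _)) h.
apply: (le_trans h); rewrite eseries0 // => i _ _; exact: N0.
Qed.

Definition wt (R : realType) n (E : {set 'I_n * 'I_n}) (lam : R) (vR : 'cV[R]_n) (i j : 'I_n) : R :=
  ((i, j) \in E)%:R * (vR j 0 / (lam * vR i 0)).

Fixpoint U (R : realType) n (E : {set 'I_n * 'I_n}) (lab : 'I_n * 'I_n -> int) (beta lam C : R)
   (vR : 'cV[R]_n) (k : nat) (x : R) (i : 'I_n) : R :=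
  match k with
  | 0 => if `|x| <= C then 1 else 0
  | k'.+1 => \sum_j wt E lam vR i j * U E lab beta lam C vR k' (beta * x - (lab (i, j))%:~R) j
  end.

Lemma sum_sel (R : realType) (A : seq int) (b : bool) (l : int) (g : int -> R) :
  uniq A -> (b -> l \in A) ->
  \sum_(a <- A) (b && (l == a))%:R * g a = b%:R * g l.
Proof.
move=> uA; case: b => /= [lA|_]; last by rewrite big1 ?mul0r // => a _; rewrite mul0r.
rewrite (bigD1_seq l) //=; last exact: lA.
have -> : (l == l) = true by apply/eqP.
rewrite mul1r big1 ?addr0 // => a; rewrite eq_sym => /negbTE ->.
by rewrite mul0r.
Qed.

Lemma words_U (R : realType) n (E : {set 'I_n * 'I_n}) (lab : 'I_n * 'I_n -> int) (A : seq int)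
   (beta lam C : R) (vR : 'cV[R]_n) :
  uniq A -> (forall e, e \in E -> lab e \in A) -> lam != 0 -> (forall i, vR i 0 != 0) ->
  forall k x i, \sum_(w <- words beta A C k x) lam ^- k * (Mword R E lab w *m vR) i 0
     = vR i 0 * U E lab beta lam C vR k x i.
Proof.
move=> uA hlab l0 v0; elim => [|k IH] x i /=.
  case: ifP => _; last by rewrite big_nil mulr0.
  by rewrite big_cons big_nil addr0 expr0 invr1 mul1r mulr1 /Mword big_nil mul1mx.
rewrite big_flatten /= big_map.
under eq_bigr => a _.
  rewrite big_map.
  under eq_bigr => w _.
    rewrite /Mword big_cons -/(Mword R E lab w) -mulmxE -mulmxA mxE.
    rewrite exprS invfM mulr_sumr.
    over.
  rewrite exchange_big /=.
  under eq_bigr => j _.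
    have -> : \sum_(w <- words beta A C k (beta * x - a%:~R))
       lam^-1 * lam^-k * (Mlab R E lab a i j * (Mword R E lab w *m vR) j 0) =
       lam^-1 * Mlab R E lab a i j * \sum_(w <- words beta A C k (beta * x - a%:~R)) lam ^- k * (Mword R E lab w *m vR) j 0.
      by rewrite mulr_sumr; apply: eq_bigr => w _; ring.
    rewrite IH mxE.
    over.
  over.
rewrite /= exchange_big /= mulr_sumr; apply: eq_bigr => j _.
have hE : ((i, j) \in E) -> lab (i, j) \in A by apply: hlab.
have -> : \sum_(a <- A) lam^-1 * (((i, j) \in E) && (lab (i, j) == a))%:R *
     (vR j 0 * U E lab beta lam C vR k (beta * x - a%:~R) j) =
   \sum_(a <- A) (((i, j) \in E) && (lab (i, j) == a))%:R *
     (lam^-1 * (vR j 0 * U E lab beta lam C vR k (beta * x - a%:~R) j)).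
  by apply: eq_bigr => a _; ring.
rewrite (@sum_sel R A _ _ (fun a : int => lam^-1 * (vR j 0 * U E lab beta lam C vR k (beta * x - a%:~R) j))) //.
rewrite /wt; field.
by apply/andP; split.
Qed.

Lemma cvg_sum_seq (R : realType) (I : Type) (r : seq I) (f : I -> nat -> R) (l : I -> R) :
  (forall i, f i @ \oo --> l i) ->
  (fun k => \sum_(i <- r) f i k) @ \oo --> \sum_(i <- r) l i.
Proof.
move=> H; elim: r => [|a r IH].
  have -> : (fun k => \sum_(i <- [::]) f i k) = (fun _ => 0 : R).
    by apply: funext => k; rewrite big_nil.
  by rewrite big_nil; exact: cvg_cst.
have -> : (fun k => \sum_(i <- a :: r) f i k) = (fun k => f a k + \sum_(i <- r) f i k).
  by apply: funext => k; rewrite big_cons.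
by rewrite big_cons; apply: cvgD.
Qed.

Lemma wt_ge0 (R : realType) n (E : {set 'I_n * 'I_n}) (lam : R) (vR : 'cV[R]_n) i j :
  0 < lam -> (forall i, 0 < vR i 0) -> 0 <= wt E lam vR i j.
Proof.
move=> hl hv; rewrite /wt mulr_ge0 ?ler0n //.
by rewrite divr_ge0 ?ltW ?mulr_gt0.
Qed.

Lemma wt_gt0 (R : realType) n (E : {set 'I_n * 'I_n}) (lam : R) (vR : 'cV[R]_n) i j :
  0 < lam -> (forall i, 0 < vR i 0) -> (i, j) \in E -> 0 < wt E lam vR i j.
Proof.
move=> hl hv hE; rewrite /wt hE mul1r.
by rewrite divr_gt0 ?mulr_gt0.
Qed.

Lemma wt_E (R : realType) n (E : {set 'I_n * 'I_n}) (lam : R) (vR : 'cV[R]_n) i j :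
  0 < wt E lam vR i j -> (i, j) \in E.
Proof. by rewrite /wt; case: ((i, j) \in E) => //; rewrite mul0r ltxx. Qed.


Lemma U_ge0 (R : realType) n (E : {set 'I_n * 'I_n}) lab (beta lam C : R) (vR : 'cV[R]_n) k x i :
  0 < lam -> (forall i, 0 < vR i 0) -> 0 <= U E lab beta lam C vR k x i.
Proof.
move=> hl hv; elim: k x i => [|k IH] x i /=; first by case: ifP.
by apply: sumr_ge0 => j _; rewrite mulr_ge0 ?wt_ge0.
Qed.

Lemma U_le1 (R : realType) n (E : {set 'I_n * 'I_n}) lab (beta lam C : R) (vR : 'cV[R]_n) k x i :
  0 < lam -> (forall i, 0 < vR i 0) -> (forall i, \sum_j wt E lam vR i j = 1) ->
  U E lab beta lam C vR k x i <= 1.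
Proof.
move=> hl hv hrow; elim: k x i => [|k IH] x i /=; first by case: ifP.
rewrite -[leRHS](hrow i); apply: ler_sum => j _.
by rewrite ler_piMr ?wt_ge0.
Qed.

Lemma U_decr (R : realType) n (E : {set 'I_n * 'I_n}) lab (beta lam C : R) (vR : 'cV[R]_n) :
  0 < lam -> (forall i, 0 < vR i 0) -> (forall i, \sum_j wt E lam vR i j = 1) ->
  1 < beta ->
  (forall i j, (i, j) \in E -> `|(lab (i, j))%:~R| + C <= beta * C) ->
  forall k x i, U E lab beta lam C vR k.+1 x i <= U E lab beta lam C vR k x i.
Proof.
move=> hl hv hrow b1 hC; elim => [|k IH] x i.
  rewrite /=; case: ifP => hx.
    rewrite -[leRHS](hrow i); apply: ler_sum => j _.
    by rewrite ler_piMr ?wt_ge0 //=; case: ifP.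
  rewrite big1 // => j _.
  have [hE|hE] := boolP ((i, j) \in E); last by rewrite /wt (negbTE hE) /= !mul0r.
  rewrite /=; case: ifP; last by rewrite mulr0.
  move=> h; exfalso; move: hx => /negbT; rewrite -ltNge => hx.
  have h1 := hC i j hE.
  have : beta * `|x| <= `|(lab (i, j))%:~R| + C.
    rewrite -[beta]ger0_norm ?(ltW (lt_trans ltr01 b1)) // -normrM.
    have -> : beta * x = (beta * x - (lab (i, j))%:~R) + (lab (i, j))%:~R by ring.
    by apply: (le_trans (ler_normD _ _)); rewrite addrC lerD2l.
  have : beta * C < beta * `|x| by rewrite ltr_pM2l ?(lt_trans ltr01 b1).
  move=> h2 h3; have := lt_le_trans h2 (le_trans h3 h1); by rewrite ltxx.
rewrite [X in _ <= X]/= [X in X <= _]/=.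
apply: ler_sum => j _; rewrite ler_wpM2l ?wt_ge0 //.
exact: IH.
Qed.

Lemma U_sep (R : realType) n (E : {set 'I_n * 'I_n}) lab (beta lam C : R) (vR : 'cV[R]_n) :
  0 < lam -> (forall i, 0 < vR i 0) -> (forall i, \sum_j wt E lam vR i j = 1) ->
  1 < beta ->
  forall k i (s : seq R), pairwise (fun x y => 2 * C / beta ^+ k < `|x - y|) s ->
  \sum_(x <- s) U E lab beta lam C vR k x i <= 1.
Proof.
move=> hl hv hrow b1; have b0 : 0 < beta by rewrite (lt_trans ltr01).
elim => [|k IH] i s.
  elim: s => [|h s IHs]; first by rewrite big_nil ler01.
  rewrite pairwise_cons => /andP [hall hs]; rewrite big_cons /=.
  case: ifP => hh; last by rewrite add0r; apply: IHs.
  rewrite big1_seq ?addr0 // => y /andP [_ ys].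
  have := allP hall y ys; rewrite /= expr0 divr1 => hy.
  case: ifP => // hyC; exfalso.
  have : `|h - y| <= 2 * C by apply: (le_trans (ler_normB _ _)); rewrite mulr2n mulrDl mul1r lerD.
  by rewrite leNgt hy.
move=> hs /=; rewrite exchange_big /=.
rewrite -[leRHS](hrow i); apply: ler_sum => j _.
rewrite -mulr_sumr ler_piMr ?wt_ge0 //.
rewrite -(big_map (fun x => beta * x - (lab (i, j))%:~R) xpredT (fun z => U E lab beta lam C vR k z j)).
apply: IH; rewrite pairwise_map; apply: sub_pairwise hs => x y /= hxy.
have -> : beta * x - (lab (i, j))%:~R - (beta * y - (lab (i, j))%:~R) = beta * (x - y) by ring.
rewrite normrM ger0_norm ?(ltW b0) //.
have -> : 2 * C / beta ^+ k = beta * (2 * C / beta ^+ k.+1).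
  by rewrite exprS invfM; field; rewrite expf_neq0 ?gt_eqF.
by rewrite ltr_pM2l.
Qed.

Record UH (R : realType) n (E : {set 'I_n * 'I_n}) (lab : 'I_n * 'I_n -> int) (beta lam C : R)
   (vR : 'cV[R]_n) : Prop := {
  uh_l : 0 < lam;
  uh_v : forall i, 0 < vR i 0;
  uh_row : forall i, \sum_j wt E lam vR i j = 1;
  uh_b : 1 < beta;
  uh_C : forall i j, (i, j) \in E -> `|(lab (i, j))%:~R| + C <= beta * C;
  uh_C0 : 0 <= C }.

Definition ul (R : realType) n (E : {set 'I_n * 'I_n}) (lab : 'I_n * 'I_n -> int) (beta lam C : R)
   (vR : 'cV[R]_n) (x : R) (i : 'I_n) : R :=
  limn (fun k => U E lab beta lam C vR k x i).

Lemma ul_cvg (R : realType) n (E : {set 'I_n * 'I_n}) lab (beta lam C : R) vR x i :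
  UH E lab beta lam C vR -> cvgn (fun k => U E lab beta lam C vR k x i).
Proof.
move=> [hl hv hrow b1 hC hC0]; apply: nonincreasing_is_cvgn.
  by apply/nonincreasing_seqP => k; apply: U_decr.
by exists 0 => _ [k _ <-]; apply: U_ge0.
Qed.

Lemma ul_le (R : realType) n (E : {set 'I_n * 'I_n}) lab (beta lam C : R) vR x i k :
  UH E lab beta lam C vR -> ul E lab beta lam C vR x i <= U E lab beta lam C vR k x i.
Proof.
move=> H; have hc : cvgn (fun k => U E lab beta lam C vR k x i) := ul_cvg H.
case: H => [hl hv hrow b1 hC hC0].
apply: nonincreasing_cvgn_ge => //.
by apply/nonincreasing_seqP => k'; apply: U_decr.
Qed.

Lemma ul_ge0 (R : realType) n (E : {set 'I_n * 'I_n}) lab (beta lam C : R) vR x i :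
  UH E lab beta lam C vR -> 0 <= ul E lab beta lam C vR x i.
Proof.
move=> H; have hc : cvgn (fun k => U E lab beta lam C vR k x i) := ul_cvg H.
case: H => [hl hv hrow b1 hC hC0].
by apply: limr_ge => //; apply: nearW => k; apply: U_ge0.
Qed.

Lemma ul_rec (R : realType) n (E : {set 'I_n * 'I_n}) lab (beta lam C : R) vR x i :
  UH E lab beta lam C vR ->
  ul E lab beta lam C vR x i =
  \sum_j wt E lam vR i j * ul E lab beta lam C vR (beta * x - (lab (i, j))%:~R) j.
Proof.
move=> H; apply: (cvg_lim (@Rhausdorff R)).
rewrite -cvg_shiftS /=.
apply: cvg_sum_seq => j; apply: cvgM; first exact: cvg_cst.
exact: ul_cvg.
Qed.

Lemma ul_out (R : realType) n (E : {set 'I_n * 'I_n}) lab (beta lam C : R) vR x i :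
  UH E lab beta lam C vR -> C < `|x| -> ul E lab beta lam C vR x i = 0.
Proof.
move=> H hx; apply/le_anti/andP; split; last exact: ul_ge0.
apply: (le_trans (ul_le _ _ 0 H)) => /=.
by case: ifP => //; rewrite leNgt hx.
Qed.

Lemma ev_all (T : eqType) (s : seq T) (P : nat -> T -> Prop) :
  (forall y, y \in s -> exists K, forall k, (K <= k)%N -> P k y) ->
  exists K, forall k, (K <= k)%N -> forall y, y \in s -> P k y.
Proof.
elim: s => [|a s IH] H; first by exists 0%N.
have [K1 h1] := H a (mem_head _ _).
have [K2 h2] : exists K, forall k, (K <= k)%N -> forall y, y \in s -> P k y.
  by apply: IH => y ys; apply: H; rewrite inE ys orbT.
exists (maxn K1 K2) => k; rewrite geq_max => /andP [k1 k2] y; rewrite inE => /orP [/eqP ->|ys].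
  exact: h1.
exact: h2.
Qed.

Lemma geo_small (R : realType) (beta C e : R) : 1 < beta -> 0 < e ->
  exists K, forall k, (K <= k)%N -> 2 * C / beta ^+ k < e.
Proof.
move=> b1 e0; have b0 : 0 < beta by rewrite (lt_trans ltr01).
have hg : geometric (2 * C) beta^-1 @ \oo --> (0 : R).
  by apply: cvg_geometric; rewrite ger0_norm ?invr_ge0 ?(ltW b0) // invf_lt1.
move/cvgrPdist_lt: hg => /(_ e e0) h0.
have [K HK] := ev_ex h0.
exists K => k /HK; rewrite sub0r normrN /geometric /= exprVn => h.
exact: le_lt_trans (ler_norm _) h.
Qed.

Lemma uniq_sep (R : realType) (beta C : R) (s : seq R) : 1 < beta -> uniq s ->
  exists K, forall k, (K <= k)%N -> pairwise (fun x y => 2 * C / beta ^+ k < `|x - y|) s.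
Proof.
move=> b1; elim: s => [|h s IH] /=; first by exists 0%N.
move=> /andP [hs us]; have [K1 h1] := IH us.
have [K2 h2] : exists K, forall k, (K <= k)%N -> forall y, y \in s -> 2 * C / beta ^+ k < `|h - y|.
  apply: ev_all => y ys; apply: geo_small => //.
  by rewrite normr_gt0 subr_eq0; apply: contraNneq hs => ->.
exists (maxn K1 K2) => k; rewrite geq_max => /andP [k1 k2].
rewrite (h1 k k1) andbT; apply/allP => y ys; exact: h2.
Qed.

Lemma ul_sum (R : realType) n (E : {set 'I_n * 'I_n}) lab (beta lam C : R) vR i (s : seq R) :
  UH E lab beta lam C vR -> uniq s -> \sum_(x <- s) ul E lab beta lam C vR x i <= 1.
Proof.
move=> H us; have [K HK] := uniq_sep C (uh_b H) us.
apply: (@le_trans _ _ (\sum_(x <- s) U E lab beta lam C vR K x i)).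
  by apply: ler_sum => x _; apply: ul_le.
case: H => [hl hv hrow b1 hC hC0].
by apply: U_sep => //; apply: HK.
Qed.

Lemma sum_ge_const (R : realType) (T : Type) (f : T -> R) (s0 : R) (l : seq T) :
  all (fun x => s0 <= f x) l -> s0 * (size l)%:R <= \sum_(x <- l) f x.
Proof.
elim: l => [|a l IH] /=; first by rewrite big_nil mulr0.
move=> /andP [ha hl]; rewrite big_cons -addn1 natrD mulrDr mulr1 addrC.
by apply: lerD => //; apply: IH.
Qed.

Lemma ul_cover (R : realType) n (E : {set 'I_n * 'I_n}) lab (beta lam C : R) vR i (s0 : R) :
  UH E lab beta lam C vR -> 0 < s0 ->
  exists l : seq R, forall x, s0 <= ul E lab beta lam C vR x i -> x \in l.
Proof.
move=> H s00; apply: contrapT => hno.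
have hn : forall l : seq R, exists x, s0 <= ul E lab beta lam C vR x i /\ x \notin l.
  move=> l; apply: contrapT => h; apply: hno; exists l => x hx.
  apply: contrapT => hxl; apply: h; exists x; split => //; exact/negP.
have hb : forall N, exists l : seq R, [/\ uniq l, size l = N & all (fun x => s0 <= ul E lab beta lam C vR x i) l].
  elim => [|N [l [ul1 sl al]]]; first by exists [::].
  have [x [hx xl]] := hn l.
  by exists (x :: l); rewrite /= xl ul1 sl hx al.
have [m hm] := archi_inv s00.
have [l [ul1 sl al]] := hb m.+1.
have := sum_ge_const al; rewrite sl => h1.
have h2 := ul_sum i H ul1.
have : s0 * m.+1%:R <= 1 := le_trans h1 h2.
rewrite -ler_pdivlMr ?ltr0Sn // div1r => h3.
by have := lt_le_trans hm h3; rewrite ltxx.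
Qed.

Lemma seq_argmax (R : realType) (T : eqType) (g : T -> R) (l : seq T) :
  l != [::] -> exists2 t, t \in l & forall t', t' \in l -> g t' <= g t.
Proof.
elim: l => // a l IH _.
case: (eqVneq l [::]) => [->|ln].
  by exists a; rewrite ?mem_head // => t'; rewrite inE => /eqP ->.
have [t tl ht] := IH ln.
case: (leP (g a) (g t)) => hat.
  exists t; first by rewrite inE tl orbT.
  by move=> t'; rewrite inE => /orP [/eqP ->|/ht].
exists a; first exact: mem_head.
move=> t'; rewrite inE => /orP [/eqP ->|/ht h] //.
exact: le_trans h (ltW hat).
Qed.

Lemma ul_max (R : realType) n (E : {set 'I_n * 'I_n}) lab (beta lam C : R) vR (x0 : R) (i0 : 'I_n) :
  UH E lab beta lam C vR -> 0 < ul E lab beta lam C vR x0 i0 ->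
  exists (ist : 'I_n) (xst : R), forall i x,
    ul E lab beta lam C vR x i <= ul E lab beta lam C vR xst ist /\
    ul E lab beta lam C vR x0 i0 <= ul E lab beta lam C vR xst ist.
Proof.
move=> H hp.
set s0 := ul E lab beta lam C vR x0 i0.
have [f hf] := fin_all_exists (fun i => ul_cover i H hp).
pose L := flatten [seq [seq (i, x) | x <- f i] | i <- enum 'I_n].
have hL : forall i x, s0 <= ul E lab beta lam C vR x i -> (i, x) \in L.
  move=> i x hx; apply/flatten_mapP; exists i; first by rewrite mem_enum.
  by apply: map_f; apply: hf.
have L0 : (i0, x0) \in L by apply: hL.
have [[ist xst] tL ht] := seq_argmax (fun t : 'I_n * R => ul E lab beta lam C vR t.2 t.1)
   (ltac:(by apply/eqP => hL0; rewrite hL0 in L0) : L != [::]).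
have hs : s0 <= ul E lab beta lam C vR xst ist by apply: (ht (i0, x0)).
exists ist, xst => i x; split => //.
case: (leP s0 (ul E lab beta lam C vR x i)) => hx.
  by apply: (ht (i, x)); apply: hL.
exact: le_trans (ltW hx) hs.
Qed.

Lemma pos_prod (R : realType) (a b : R) : 0 <= a -> 0 <= b -> 0 < a * b -> 0 < a /\ 0 < b.
Proof.
move=> a0 b0; rewrite lt0r mulf_eq0 negb_or => /andP [/andP [na nb] _].
by rewrite !lt0r na nb a0 b0.
Qed.

Lemma sum_pos_ex (R : realType) (I : finType) (F : I -> R) :
  0 < \sum_i F i -> exists i, 0 < F i.
Proof.
move=> h; apply: contrapT => hn.
have : \sum_i F i <= 0.
  apply: sumr_le0 => i _; rewrite leNgt; apply/negP => hi; apply: hn; by exists i.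
by rewrite leNgt h.
Qed.

Lemma ul_closure (R : realType) n (E : {set 'I_n * 'I_n}) lab (beta lam C : R) vR (m y : R) i j :
  UH E lab beta lam C vR -> (forall x j, ul E lab beta lam C vR x j <= m) ->
  ul E lab beta lam C vR y i = m -> (i, j) \in E ->
  ul E lab beta lam C vR (beta * y - (lab (i, j))%:~R) j = m.
Proof.
move=> H hm hy hE.
have h0 : \sum_l wt E lam vR i l * (m - ul E lab beta lam C vR (beta * y - (lab (i, l))%:~R) l) = 0.
  have -> : \sum_l wt E lam vR i l * (m - ul E lab beta lam C vR (beta * y - (lab (i, l))%:~R) l)
     = m * \sum_l wt E lam vR i l - \sum_l wt E lam vR i l * ul E lab beta lam C vR (beta * y - (lab (i, l))%:~R) l.
    rewrite mulr_sumr -sumrB; apply: eq_bigr => l _; ring.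
  by rewrite (uh_row H) mulr1 -ul_rec // hy subrr.
have hnn : forall l : 'I_n, true ->
   0 <= wt E lam vR i l * (m - ul E lab beta lam C vR (beta * y - (lab (i, l))%:~R) l).
  move=> l _; rewrite mulr_ge0 ?subr_ge0 ?hm //.
  by apply: wt_ge0; [exact: (uh_l H) | exact: (uh_v H)].
have h2 := @psumr_eq0P _ _ _ _ hnn h0 j isT.
move: h2 => /eqP; rewrite mulf_eq0 => /orP [/eqP hw|].
  by have := wt_gt0 (uh_l H) (uh_v H) hE; rewrite hw ltxx.
by rewrite subr_eq0 => /eqP <-.
Qed.

Lemma mpow_ge0 (R : realType) n (M : 'M[R]_n) :
  (forall i j, 0 <= M i j) -> forall k i j, 0 <= (M ^+ k) i j.
Proof.
move=> hM; elim => [|k IH] i j.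
  by rewrite expr0 !mxE; case: (i == j).
rewrite exprS -mulmxE mxE; apply: sumr_ge0 => l _; exact: mulr_ge0.
Qed.

Lemma reach_rel (R : realType) n (M : 'M[R]_n) (Rel : 'I_n -> 'I_n -> nat -> Prop) :
  (forall i j, 0 <= M i j) -> (forall i, Rel i i 0%N) ->
  (forall i l j k, 0 < M i l -> Rel l j k -> Rel i j k.+1) ->
  forall k i j, 0 < (M ^+ k) i j -> Rel i j k.
Proof.
move=> hM h0 hS; elim => [|k IH] i j.
  rewrite expr0 !mxE; case: eqP => [->|]; first by move=> _; apply: h0.
  by rewrite /= ltxx.
rewrite exprS -mulmxE mxE => /sum_pos_ex [l hl].
have [h1 h2] := pos_prod (hM i l) (mpow_ge0 hM k l j) hl.
exact: hS h1 (IH _ _ h2).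
Qed.

Lemma ul_uniq_aux (R : realType) n (E : {set 'I_n * 'I_n}) lab (beta lam C : R) vR (m : R) :
  UH E lab beta lam C vR -> (forall x j, ul E lab beta lam C vR x j <= m) -> 0 < m ->
  forall k i x y, 0 < ul E lab beta lam C vR x i -> ul E lab beta lam C vR y i = m ->
  `|x - y| <= 2 * C / beta ^+ k.
Proof.
move=> H hm m0; have b0 : 0 < beta by rewrite (lt_trans ltr01) ?(uh_b H).
elim => [|k IH] i x y hx hy.
  rewrite expr0 divr1.
  have hxC : `|x| <= C.
    rewrite leNgt; apply/negP => hc; move: hx; by rewrite ul_out // ltxx.
  have hyC : `|y| <= C.
    rewrite leNgt; apply/negP => hc; move: m0; by rewrite -hy ul_out // ltxx.
  by apply: (le_trans (ler_normB _ _)); rewrite mulr2n mulrDl mul1r lerD.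
move: hx; rewrite ul_rec // => /sum_pos_ex [j hj].
have [hw hu] := pos_prod (@wt_ge0 _ _ E lam vR i j (uh_l H) (uh_v H)) (ul_ge0 _ _ H) hj.
have hE := wt_E hw.
have hy' := ul_closure H hm hy hE.
have := IH _ _ _ hu hy'.
have -> : beta * x - (lab (i, j))%:~R - (beta * y - (lab (i, j))%:~R) = beta * (x - y) by ring.
rewrite normrM ger0_norm ?(ltW b0) // => h.
have -> : 2 * C / beta ^+ k.+1 = (2 * C / beta ^+ k) / beta.
  by rewrite exprS invfM; field; rewrite expf_neq0 ?gt_eqF.
by rewrite ler_pdivlMr // mulrC.
Qed.

Lemma sum_cyl (R : realType) n (E : {set 'I_n * 'I_n}) (lab : 'I_n * 'I_n -> int) (A : seq int)
   (beta lam : R) (vL : 'rV[R]_n) (vR : 'cV[R]_n) (mu : probability seqSpace R) k x :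
  uniq A -> (forall e, e \in E -> lab e \in A) -> 0 < lam -> (forall i, 0 < vR i 0) ->
  (forall s : seq int,
       mu (cylinder s) = (lam ^- size s * (vL *m Mword R E lab s *m vR) 0 0)%:E) ->
  (\sum_(w <- words beta A (Cb beta A) k x) mu (cylinder w))%E =
  (\sum_i vL 0 i * (vR i 0 * U E lab beta lam (Cb beta A) vR k x i))%:E.
Proof.
move=> uA hlab hl hv hcyl.
rewrite (eq_big_seq (fun w => (lam ^- k * (vL *m (Mword R E lab w *m vR)) 0 0)%:E)); last first.
  by move=> w hw; rewrite hcyl (words_size hw) mulmxA.
rewrite sumEFin; congr (_%:E).
under eq_bigr => w _ do rewrite mxE mulr_sumr.
rewrite exchange_big /=; apply: eq_bigr => i _.
rewrite -(@words_U R n E lab A beta lam (Cb beta A) vR uA hlab (lt0r_neq0 hl) (fun i => lt0r_neq0 (hv i)) k x i).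
by rewrite mulr_sumr; apply: eq_bigr => w _; ring.
Qed.

Lemma le_add0 (R : realType) (a b c : \bar R) : a = 0%E -> (b <= c)%E -> (a + b <= c)%E.
Proof. by move=> ->; rewrite add0e. Qed.

Lemma link (R : realType) n (E : {set 'I_n * 'I_n}) (lab : 'I_n * 'I_n -> int) (A : seq int)
   (beta lam : R) (vL : 'rV[R]_n) (vR : 'cV[R]_n) (mu : probability seqSpace R) x :
  uniq A -> (forall e, e \in E -> lab e \in A) -> (forall i, 0 < vL 0 i) ->
  UH E lab beta lam (Cb beta A) vR ->
  (forall s : seq int,
       mu (cylinder s) = (lam ^- size s * (vL *m Mword R E lab s *m vR) 0 0)%:E) ->
  (0 < mu (phiplus beta @^-1` [set x]))%E ->
  exists i, 0 < ul E lab beta lam (Cb beta A) vR x i.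
Proof.
move=> uA hlab hvL H hcyl hP.
have b1 := uh_b H; have hl := uh_l H; have hv := uh_v H.
set P := phiplus beta @^-1` [set x].
have mP : measurable (P : set seqSpace) := P_meas beta x.
have nullG : mu (~` Gset A : set seqSpace) = 0%E.
  apply: null_from_cyl => w hw; rewrite hcyl (Mword_notA R hlab hw) mulmx0 mul0mx mxE mulr0.
  by [].
pose g k := \sum_i vL 0 i * (vR i 0 * U E lab beta lam (Cb beta A) vR k x i).
have hb : forall k, (mu P <= (g k)%:E)%E.
  move=> k.
  have mG : measurable (~` Gset A : set seqSpace).
    apply: measurableC.
    have -> : Gset A = \bigcap_j [set y : seqZ | y j \in A].
      apply/seteqP; split => y /= h; first by move=> j _; apply: h.
      by move=> j; apply: (h j).
    apply: bigcapT_measurable => j; apply: (@fc_meas j.+1) => y y' hyy /=.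
    by rewrite hyy.
  have mU : measurable (\big[setU/set0]_(w <- words beta A (Cb beta A) k x) cylinder w : set seqSpace).
    by apply: bigsetU_measurable => w _; apply: cylinder_meas.
  have hsub : (P : set seqSpace) `<=`
     (~` Gset A `|` \big[setU/set0]_(w <- words beta A (Cb beta A) k x) cylinder w : set seqSpace).
    exact: cover_P A k x b1.
  have mPU : measurable (~` Gset A `|` \big[setU/set0]_(w <- words beta A (Cb beta A) k x) cylinder w : set seqSpace).
    exact: measurableU.
  apply: (le_trans (le_measure mu _ _ hsub)); rewrite ?inE //.
  apply: (le_trans (measureU2 _ mG mU)); apply: (@le_add0 R _ _ _ nullG).
  apply: le_trans; first by apply: measure_bigsetU_le => w; apply: cylinder_meas.
  by rewrite (@sum_cyl R n E lab A beta lam vL vR mu k x uA hlab hl hv hcyl).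
have hfin : mu P \is a fin_num.
  by rewrite ge0_fin_numE ?measure_ge0 // (le_lt_trans (hb 0%N)) ?ltry.
set d := fine (mu P).
have hd : mu P = d%:E by rewrite fineK.
have d0 : 0 < d by rewrite -lte_fin -hd.
have hdg : forall k, d <= g k by move=> k; rewrite -lee_fin -hd.
have hg : g @ \oo --> \sum_i vL 0 i * (vR i 0 * ul E lab beta lam (Cb beta A) vR x i).
  apply: cvg_sum_seq => i; apply: cvgM; first exact: cvg_cst.
  apply: cvgM; first exact: cvg_cst.
  exact: ul_cvg.
have : d <= \sum_i vL 0 i * (vR i 0 * ul E lab beta lam (Cb beta A) vR x i).
  rewrite -(cvg_lim (@Rhausdorff R) hg).
  by apply: limr_ge; [exact: cvgP hg | apply: nearW].
move=> /(lt_le_trans d0) /sum_pos_ex [i hi]; exists i.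
have [_ h2] := pos_prod (ltW (hvL i)) (mulr_ge0 (ltW (hv i)) (ul_ge0 _ _ H)) hi.
have [_ h3] := pos_prod (ltW (hv i)) (ul_ge0 _ _ H) h2.
exact: h3.
Qed.

Lemma Mtot_entry (R : realType) n (E : {set 'I_n * 'I_n}) (lab : 'I_n * 'I_n -> int) (A : seq int) i j :
  uniq A -> (forall e, e \in E -> lab e \in A) ->
  Mtot R E lab A i j = ((i, j) \in E)%:R.
Proof.
move=> uA hlab; rewrite /Mtot summxE.
have := @sum_sel R A ((i, j) \in E) (lab (i, j)) (fun _ => 1) uA (hlab (i, j)).
rewrite mulr1 => <-; apply: eq_bigr => a _; by rewrite mxE mulr1.
Qed.

Lemma row_sum1 (R : realType) n (E : {set 'I_n * 'I_n}) (lab : 'I_n * 'I_n -> int) (A : seq int)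
  (lam : R) (vR : 'cV[R]_n) :
  uniq A -> (forall e, e \in E -> lab e \in A) -> 0 < lam -> (forall i, 0 < vR i 0) ->
  Mtot R E lab A *m vR = lam *: vR -> forall i, \sum_j wt E lam vR i j = 1.
Proof.
move=> uA hlab hl hv hvR i.
have h : (Mtot R E lab A *m vR) i 0 = (lam *: vR) i 0 by rewrite hvR.
rewrite !mxE in h.
rewrite /wt.
have -> : \sum_j ((i, j) \in E)%:R * (vR j 0 / (lam * vR i 0)) =
   (\sum_j Mtot R E lab A i j * vR j 0) / (lam * vR i 0).
  rewrite mulr_suml; apply: eq_bigr => j _; rewrite Mtot_entry //; ring.
rewrite h mulfV // mulf_neq0 // ?lt0r_neq0 //.
Qed.

Lemma hC_lemma (R : realType) n (E : {set 'I_n * 'I_n}) (lab : 'I_n * 'I_n -> int) (A : seq int)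
  (beta : R) :
  1 < beta -> (forall e, e \in E -> lab e \in A) ->
  forall i j, (i, j) \in E -> `|(lab (i, j))%:~R| + Cb beta A <= beta * Cb beta A.
Proof.
move=> b1 hlab i j hE.
have b10 : beta - 1 != 0 by rewrite subr_eq0 gt_eqF.
have -> : beta * Cb beta A = Kb R A + Cb beta A by rewrite /Cb; field.
by rewrite lerD2r Kb_ge' // hlab.
Qed.
Unset Implicit Arguments.
Set Strict Implicit.
Theorem lemma3 (R : realType) (n : nat) (E : {set 'I_n * 'I_n})
    (lab : 'I_n * 'I_n -> int) (A : seq int)
    (hA : uniq A) (hlab : forall e, e \in E -> lab e \in A)
    (hprim : primitive (Mtot R E lab A))
    (beta : R) (hbeta : pisot beta)
    (lam : R) (vL : 'rV[R]_n) (vR : 'cV[R]_n)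
    (hlam : 0 < lam)
    (hdom : forall (c : R[i]) (v : 'cV[R[i]]_n), v != 0 ->
       map_mx (fun r : R => (r%:C)%C) (Mtot R E lab A) *m v = c *: v ->
       c != (lam%:C)%C -> `|c| < (lam%:C)%C)
    (hvL : vL *m Mtot R E lab A = lam *: vL) (hvR : Mtot R E lab A *m vR = lam *: vR)
    (hvLpos : forall i, 0 < vL 0 i) (hvRpos : forall i, 0 < vR i 0)
    (hnorm : (vL *m vR) 0 0 = 1)
    (mu : probability seqSpace R)
    (hsupp : mu (~` Kplus E lab) = 0%E)
    (hcyl : forall s : seq int,
       mu (cylinder s) = (lam ^- size s * (vL *m Mword R E lab s *m vR) 0 0)%:E) :
  finite_set (atoms beta mu) /\ atoms beta mu `<=` [set x | in_Qbeta beta x].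
Proof.
have b1 : 1 < beta by case: hbeta.
have hrow := row_sum1 hA hlab hlam hvRpos hvR.
have H : UH E lab beta lam (Cb beta A) vR.
  split => //; first exact: hC_lemma.
  by rewrite /Cb divr_ge0 ?Kb_ge0 // subr_ge0 ltW.
have hlink : forall x, atoms beta mu x -> exists i, 0 < ul E lab beta lam (Cb beta A) vR x i.
  by move=> x hx; apply: (link hA hlab hvLpos H hcyl hx).
case: (pselect (exists x, atoms beta mu x)) => [[x0 hx0]|hno]; last first.
  have -> : atoms beta mu = set0.
    by apply/seteqP; split => x // hx; exfalso; apply: hno; exists x.
  by split; [exact: finite_set0 | exact: sub0set].
have [i0 hi0] := hlink x0 hx0.
have [ist [xst hmax]] := ul_max H hi0.
set m := ul E lab beta lam (Cb beta A) vR xst ist.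
have hm : forall x i, ul E lab beta lam (Cb beta A) vR x i <= m := fun x i => (hmax i x).1.
have m0 : 0 < m := lt_le_trans hi0 (hmax i0 x0).2.
set M := Mtot R E lab A.
have hMnn : forall i j, 0 <= M i j := hprim.1.
have [k0 [k0pos hk0]] := hprim.2.
have hME : forall i j, 0 < M i j -> (i, j) \in E.
  move=> i j; rewrite /M Mtot_entry //.
  by case: ((i, j) \in E); rewrite ?ltxx.
have hQ : forall j, exists y, ul E lab beta lam (Cb beta A) vR y j = m.
  move=> j.
  apply: (@reach_rel R n M (fun i j _ => (exists y, ul E lab beta lam (Cb beta A) vR y i = m) ->
      exists y, ul E lab beta lam (Cb beta A) vR y j = m) hMnn _ _ k0 ist j (hk0 ist j)).
  - by move=> i.
  - move=> i l j' k hil hlj [y hy]; apply: hlj; exists (beta * y - (lab (i, l))%:~R).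
    exact: ul_closure H hm hy (hME _ _ hil).
  - by exists xst.
have [c hc] := fin_all_exists hQ.
have huniq : forall i x, 0 < ul E lab beta lam (Cb beta A) vR x i -> x = c i.
  move=> i x hx; apply: contrapT => hne.
  have hd : 0 < `|x - c i| by rewrite normr_gt0 subr_eq0; apply/eqP.
  have [K HK] := geo_small (Cb beta A) b1 hd.
  have := ul_uniq_aux H hm m0 K hx (hc i).
  by rewrite leNgt HK.
have hedge : forall i j, (i, j) \in E -> beta * c i - (lab (i, j))%:~R = c j.
  by move=> i j hE; apply: huniq; rewrite (ul_closure H hm (hc i) hE).
have hpoly : forall k i j, 0 < (M ^+ k) i j ->
    exists Q : {poly rat}, beta ^+ k * c i = c j + (map_poly ratr Q).[beta].
  apply: reach_rel => //.
  - by move=> i; exists 0; rewrite rmorph0 horner0 addr0 expr0 mul1r.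
  - move=> i l j k hil [Q hQ']; exists (Q + ((lab (i, l))%:~R)%:P * 'X^k).
    rewrite rmorphD rmorphM /= map_polyC map_polyXn hornerD hornerM hornerC hornerXn /= ratr_int.
    have he := hedge i l (hME _ _ hil).
    have hbc : beta * c i = c l + (lab (i, l))%:~R by rewrite -he; ring.
    rewrite exprSr -mulrA hbc mulrDr hQ'; ring.
have hQb : forall i, in_Qbeta beta (c i).
  move=> i; have [Q hQ'] := hpoly k0 i i (hk0 i i).
  exists Q, ('X^k0 - 1).
  have -> : (map_poly ratr ('X^k0 - 1 : {poly rat})).[beta] = beta ^+ k0 - 1.
    by rewrite rmorphB /= map_polyXn rmorph1 !hornerE.
  have hne : beta ^+ k0 - 1 != 0.
    by rewrite subr_eq0 gt_eqF // exprn_egt1 // -lt0n.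
  split => //.
  apply: (mulIf hne); rewrite mulfVK //.
  have -> : (map_poly ratr Q).[beta] = beta ^+ k0 * c i - c i by rewrite hQ'; ring.
  ring.
split.
  apply: (@sub_finite_set _ _ (c @` setT)); last by apply: finite_image; apply: finite_finset.
  by move=> x hx; have [i hi] := hlink x hx; exists i => //; rewrite (huniq _ _ hi).
by move=> x hx; have [i hi] := hlink x hx; rewrite (huniq _ _ hi); exact: hQb.
Qed.
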